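(* Let $\Gamma$ be a totally ordered set, $\sigma:\Gamma\to\Gamma$ an order-preserving embedding with $\sigma(\gamma)<\gamma$ for all $\gamma\in\Gamma$, and $(\mathbf k,\log)$ an ordered field with surjective logarithm. Let $G=\Gamma^{\mathbf k}$ with prelogarithmic section $l_\sigma$, and consider the EL-series field $\mathbf k((\Gamma^{\mathbf k}))^{\sigma EL}$ with logarithm $\mathrm{Log}_\sigma$. Then for every $n\ge0$ and every $g\in G^{\#n}$ with $g>1$ we have $v(\mathrm{Log}_\sigma(g))<g$, where $v$ is the canonical valuation on $\mathbf k((G^{\#(n+1)}))$.
   Context: Let $\mathbf k$ be an ordered field and $(G,\cdot,<)$ a totally ordered abelian group. $\mathbf k((G))$ denotes the field of generalized power series $\alpha=\sum_{g\in G}\alpha(g)\,g$ with anti-well-ordered support, usual operations, canonical valuation $v(\alpha)=\max\operatorname{supp}\alpha$ and ordering $\alpha>0$ iff $\alpha(v(\alpha))>0$. $\mathbf k((S))=\{\alpha:\operatorname{supp}\alpha\subseteq S\}$, $G^{>1}=\{g>1\}$. Hahn group: $\Gamma^{\mathbf k}$ is the set of formal products $g=\prod_{\gamma\in\Gamma}x_\gamma^{g(\gamma)}$, $g(\gamma)\in\mathbf k$, with anti-well-ordered support $\{\gamma:g(\gamma)\ne0\}\subseteq\Gamma$, multiplied pointwise, ordered by $g>1$ iff $g(\gamma)>0$ for $\gamma=\max\operatorname{supp}g$. The prelogarithmic section $l_\sigma:\Gamma^{\mathbf k}\to\mathbf k((G^{>1}))$ is $l_\sigma(\prod x_\gamma^{g(\gamma)})=\sum_\gamma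 g(\gamma)\,x_{\sigma(\gamma)}$ (here $x_{\sigma(\gamma)}\in\Gamma^{\mathbf k}$ is a monomial). A prelogarithmic section is an order-preserving group embedding $l:(G,\cdot)\to(\mathbf k((G^{>1})),+)$. Exponential extension: $G^\#$ is the ordered abelian group of formal symbols $e(\alpha)$, $\alpha\in\mathbf k((G^{>1}))$, with $e(\alpha)e(\beta)=e(\alpha+\beta)$, $e(\alpha)<e(\beta)\iff\alpha<\beta$, and $e(l(g))$ identified with $g\in G$; $l^\#(e(\alpha))=\alpha$ is a prelogarithmic section extending $l$. Iterating gives $G^{\#n}$, $l^{\#n}$; the EL-series field $\mathbf k((G))^{EL}=\bigcup_n\mathbf k((G^{\#n}))$ has logarithm $\mathrm{Log}$ given on $G^{\#n}$ by $l^{\#n}$ (and in general by $\mathrm{Log}(g\,a(1+\varepsilon))=l^{\#n}(g)+\log a+\sum_{i\ge1}(-1)^{i-1}\varepsilon^i/i$). For $(G,l)=(\Gamma^{\mathbf k},l_\sigma)$ this field is denoted $\mathbf k((\Gamma^{\mathbf k}))^{\sigma EL}$ and its logarithm $\mathrm{Log}_\sigma$. *)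

(* Defs.v *)
From HB Require Import structures.
From mathcomp Require Import all_boot all_order all_algebra.
From Stdlib Require Import ClassicalEpsilon.
Set Implicit Arguments. Unset Strict Implicit. Unset Printing Implicit Defensive.
Import Order.TTheory GRing.Theory Num.Theory.
Local Open Scope ring_scope.

Section Defs.
Variable k : realFieldType.

Definition anti_wo (T : Type) (lt : T -> T -> Prop) (S : T -> Prop) : Prop :=
  forall A : T -> Prop, (forall x, A x -> S x) -> (exists x, A x) ->
    exists m, A m /\ forall y, A y -> ~ lt m y.

Definition supp (T : Type) (f : T -> k) : T -> Prop := fun g => f g <> 0.

(* Order on generalized power series / Hahn group elements (functions with
   anti-well-ordered support): a < b iff the coefficient of b - a at the
   maximum of its support is positive. *)
Definition ser_lt (T : Type) (lt : T -> T -> Prop) (a b : T -> k) : Prop :=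
  exists m, a m < b m /\ forall h, lt m h -> a h = b h.

(* canonical valuation v(a) = max supp a (d is an arbitrary default, used
   only when a = 0) *)
Definition ser_val (T : Type) (lt : T -> T -> Prop) (d : T) (a : T -> k) : T :=
  epsilon (inhabits d) (fun m => a m <> 0 /\ forall h, a h <> 0 -> ~ lt m h).

(* An ordered group G (carrier [car], strict order [ltc], unit [onec], the
   subset [memc] of elements of the carrier that belong to G) together with a
   prelogarithmic section [lc] : G -> k((G^{>1})) (series as coefficient
   functions car -> k). *)
Record PLG := {
  car : Type;
  ltc : car -> car -> Prop;
  onec : car;
  memc : car -> Prop;
  lc : car -> (car -> k) }.
Arguments ltc : clear implicits.
Arguments onec : clear implicits.
Arguments memc : clear implicits.
Arguments lc : clear implicits.

(* The Hahn group Gamma^k: g = prod x_gamma^{g(gamma)} represented by its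
   exponent function g : Gamma -> k with anti-well-ordered support. *)
Definition monom (d : Order.disp_t) (Γ : orderType d) (δ : Γ) : Γ -> k :=
  fun γ => if γ == δ then 1 else 0.

(* l_sigma (prod x_gamma^{g(gamma)}) = sum_gamma g(gamma) x_{sigma(gamma)} *)
Definition l_sigma (d : Order.disp_t) (Γ : orderType d) (σ : Γ -> Γ)
    (g : Γ -> k) : (Γ -> k) -> k := fun h =>
  match excluded_middle_informative (exists γ, h = monom (σ γ)) with
  | left H => g (proj1_sig (constructive_indefinite_description _ H))
  | right _ => 0
  end.

Definition hahn_base (d : Order.disp_t) (Γ : orderType d) (σ : Γ -> Γ) : PLG :=
  {| car := Γ -> k;
     ltc := ser_lt (fun x y : Γ => (x < y)%O);
     onec := fun _ => 0;
     memc := fun g => anti_wo (fun x y : Γ => (x < y)%O) (supp g);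
     lc := l_sigma σ |}.

(* G^# = { e(alpha) : alpha in k((G^{>1})) },
   with e(alpha) represented by alpha itself; the ordering is that of
   k((G^{>1})); g in G is identified with e(l(g)) = l(g).
   l^#(e(alpha)) = alpha, viewed in k((G^{#>1})) via G ⊆ G^#, i.e. the
   pushforward of alpha along the identification g |-> l(g). *)
Definition push (P : PLG) (f : car P -> k) : (car P -> k) -> k := fun h =>
  match excluded_middle_informative (exists g : car P, memc P g /\ lc P g = h) with
  | left H => f (proj1_sig (constructive_indefinite_description _ H))
  | right _ => 0
  end.

Definition sharp (P : PLG) : PLG :=
  {| car := car P -> k;
     ltc := ser_lt (ltc P);
     onec := fun _ => 0;
     memc := fun f => anti_wo (ltc P) (supp f) /\
                      (forall h, supp f h -> memc P h /\ ltc P (onec P) h);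
     lc := @push P |}.

Fixpoint tower (P : PLG) (n : nat) : PLG :=
  match n with 0 => P | S m => sharp (tower P m) end.

Definition is_log (log : k -> k) : Prop :=
  (forall x y, 0 < x -> 0 < y -> log (x * y) = log x + log y) /\
  (forall x y, 0 < x -> x < y -> log x < log y).

End Defs.

Arguments ltc {k} p _ _.
Arguments onec {k} p.
Arguments memc {k} p _.
Arguments lc {k} p _ _.

(* Main.v *)
Require Import Defs.
From HB Require Import structures.
From mathcomp Require Import all_boot all_order all_algebra.
From Stdlib Require Import ClassicalEpsilon FunctionalExtensionality.
Set Implicit Arguments. Unset Strict Implicit. Unset Printing Implicit Defensive.
Import Order.TTheory GRing.Theory Num.Theory.
Local Open Scope ring_scope.

Definition sto (T : Type) (lt : T -> T -> Prop) (M : T -> Prop) : Prop :=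
  (forall x, M x -> ~ lt x x) /\
  (forall x y z, M x -> M y -> M z -> lt x y -> lt y z -> lt x z) /\
  (forall x y, M x -> M y -> x = y \/ lt x y \/ lt y x).

Lemma sto_sub T (lt : T -> T -> Prop) (M N : T -> Prop) :
  sto lt M -> (forall x, N x -> M x) -> sto lt N.
Proof.
move=> [h1 [h2 h3]] hs; split; [|split].
- by move=> x /hs; apply: h1.
- by move=> x y z /hs ? /hs ? /hs ?; apply: h2.
- by move=> x y /hs ? /hs ?; apply: h3.
Qed.

Lemma anti_wo_sub T (lt : T -> T -> Prop) (S D : T -> Prop) :
  anti_wo lt S -> (forall x, D x -> S x) -> anti_wo lt D.
Proof. by move=> h hs A hA; apply: h => x /hA /hs. Qed.

Lemma anti_wo_union T (lt : T -> T -> Prop) (M S1 S2 : T -> Prop) :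
  sto lt M -> anti_wo lt S1 -> anti_wo lt S2 ->
  (forall x, S1 x -> M x) -> (forall x, S2 x -> M x) ->
  anti_wo lt (fun x => S1 x \/ S2 x).
Proof.
move=> [h1 [h2 h3]] w1 w2 m1 m2 A hA [a Aa].
have [[b [Ab S1b]]|n1] := classic (exists x, A x /\ S1 x); last first.
  have hA2 : forall x, A x -> S2 x.
    by move=> x Ax; case: (hA x Ax) => // S1x; exfalso; apply: n1; exists x.
  exact: w2 A hA2 (ex_intro _ a Aa).
have [[c [Ac S2c]]|n2] := classic (exists x, A x /\ S2 x); last first.
  have hA1 : forall x, A x -> S1 x.
    by move=> x Ax; case: (hA x Ax) => // S2x; exfalso; apply: n2; exists x.
  exact: w1 A hA1 (ex_intro _ a Aa).
have [u [[Au S1u] hu]] := w1 (fun x => A x /\ S1 x) (fun x hx => proj2 hx) (ex_intro _ b (conj Ab S1b)).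
have [v [[Av S2v] hv]] := w2 (fun x => A x /\ S2 x) (fun x hx => proj2 hx) (ex_intro _ c (conj Ac S2c)).
have [Mu Mv] := (m1 _ S1u, m2 _ S2v).
case: (h3 u v Mu Mv) => [e|[luv|lvu]]; first subst v.
- exists u; split=> // y Ay; case: (hA y Ay) => Sy.
  + by apply: hu.
  + by apply: hv.
- exists v; split=> // y Ay; case: (hA y Ay) => Sy.
  + move=> lvy; apply: (hu y (conj Ay Sy)); exact: (h2 u v y Mu Mv (m1 _ Sy) luv lvy).
  + by apply: hv.
- exists u; split=> // y Ay; case: (hA y Ay) => Sy.
  + by apply: hu.
  + move=> luy; apply: (hv y (conj Ay Sy)); exact: (h2 v u y Mv Mu (m2 _ Sy) lvu luy).
Qed.

Lemma diff_M (k : realFieldType) T (M : T -> Prop) (f g : T -> k) x :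
  (forall h, supp f h -> M h) -> (forall h, supp g h -> M h) -> f x <> g x -> M x.
Proof.
move=> hf hg hne; case: (eqVneq (f x) 0) => [e|ne].
- apply: hg => ge; apply: hne; by rewrite e ge.
- by apply: hf => /eqP; rewrite (negbTE ne).
Qed.

Definition serM (k : realFieldType) T (lt : T -> T -> Prop) (M : T -> Prop) (f : T -> k) :=
  anti_wo lt (supp f) /\ forall h, supp f h -> M h.

Lemma ser_sto (k : realFieldType) T (lt : T -> T -> Prop) (M : T -> Prop) :
  sto lt M -> sto (@ser_lt k T lt) (serM lt M).
Proof.
move=> hs; have [h1 [h2 h3]] := hs; split; [|split].
- by move=> f _ [m [hm _]]; rewrite ltxx in hm.
- move=> f g h [wf sf] [wg sg] [wh sh] [m1 [l1 e1]] [m2 [l2 e2]].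
  have M1 : M m1 by apply: (diff_M sf sg) => e; rewrite e ltxx in l1.
  have M2 : M m2 by apply: (diff_M sg sh) => e; rewrite e ltxx in l2.
  case: (h3 m1 m2 M1 M2) => [e|[l12|l21]]; first subst m2.
  + exists m1; split; first exact: lt_trans l1 l2.
    by move=> x hx; rewrite e1 // e2.
  + exists m2; split; first by rewrite e1.
    move=> x hx; rewrite -e2 //; case: (eqVneq (f x) (g x)) => // /eqP ne.
    have Mx := diff_M sf sg ne.
    by exfalso; apply: ne; apply: e1; exact: (h2 _ _ _ M1 M2 Mx l12 hx).
  + exists m1; split; first by rewrite -e2.
    move=> x hx; rewrite e1 //; case: (eqVneq (g x) (h x)) => // /eqP ne.
    have Mx := diff_M sg sh ne.
    by exfalso; apply: ne; apply: e2; exact: (h2 _ _ _ M2 M1 Mx l21 hx).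
- move=> f g [wf sf] [wg sg].
  have [e|ne] := classic (forall x, f x = g x).
    by left; apply: functional_extensionality.
  have [x0 hx0] : exists x, f x <> g x.
    by apply: NNPP => hn; apply: ne => x; apply: NNPP => hx; apply: hn; exists x.
  have wD : anti_wo lt (fun x => f x <> g x).
    apply: (anti_wo_sub (anti_wo_union hs wf wg sf sg)).
    move=> x hx; case: (eqVneq (f x) 0) => [e|n]; [right|left].
    + by move=> ge; apply: hx; rewrite e ge.
    + by move/eqP; rewrite (negbTE n).
  have [m [Dm hm]] := wD _ (fun x h => h) (ex_intro _ x0 hx0).
  have eq_above : forall h, lt m h -> f h = g h.
    by move=> h hh; apply: NNPP => nh; exact: (hm h nh hh).
  right; case: (ltgtP (f m) (g m)) => [l|l|e]; last by [].
  + by left; exists m; split=> // h hh; apply: eq_above.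
  + by right; exists m; split=> // h hh; symmetry; apply: eq_above.
Qed.

Lemma ser_below (k : realFieldType) T (lt : T -> T -> Prop) (M : T -> Prop)
  (a b : T -> k) g0 : sto lt M -> M g0 -> 0 < b g0 -> (forall h, lt g0 h -> b h = 0) ->
  (forall h, a h <> 0 -> M h /\ lt h g0) -> ser_lt lt a b.
Proof.
move=> [h1 [h2 h3]] Mg0 bpos babove ha.
have ag0 : a g0 = 0.
  apply: NNPP => ne; have [_ l] := ha _ ne; exact: (h1 _ Mg0 l).
exists g0; split; first by rewrite ag0.
move=> h lh; rewrite babove //; apply: NNPP => ne.
have [Mh l] := ha _ ne; exact: (h1 _ Mg0 (h2 _ _ _ Mg0 Mh Mg0 lh l)).
Qed.

Lemma ser_val_spec (k : realFieldType) T (lt : T -> T -> Prop) (d : T) (a : T -> k) :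
  anti_wo lt (supp a) -> (exists x, a x <> 0) ->
  a (ser_val lt d a) <> 0 /\ forall h, a h <> 0 -> ~ lt (ser_val lt d a) h.
Proof.
move=> w [x hx]; rewrite /ser_val.
apply: (epsilon_spec (inhabits d) (fun m => a m <> 0 /\ forall h, a h <> 0 -> ~ lt m h)).
have [m [Am hm]] : exists m, supp a m /\ forall y, supp a y -> ~ lt m y.
  by apply: w; [move=> ? ?|exists x].
by exists m.
Qed.

Lemma push_val (k : realFieldType) (P : PLG k) (f : car P -> k) g :
  (forall g g', memc P g -> memc P g' -> lc P g = lc P g' -> g = g') ->
  memc P g -> push f (lc P g) = f g.
Proof.
move=> inj mg; rewrite /push; case: excluded_middle_informative => [H|H].
- case: (constructive_indefinite_description _ H) => g1 [m1 e1] /=.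
  by rewrite (inj _ _ m1 mg e1).
- by exfalso; apply: H; exists g.
Qed.

Lemma push_supp (k : realFieldType) (P : PLG k) (f : car P -> k) h :
  push f h <> 0 -> exists g, memc P g /\ lc P g = h /\ f g <> 0.
Proof.
rewrite /push; case: excluded_middle_informative => [H|H] //.
by case: (constructive_indefinite_description _ H) => g1 [m1 e1] /= ne; exists g1.
Qed.

Lemma push0 (k : realFieldType) (P : PLG k) : push (fun _ : car P => 0) = (fun _ => 0).
Proof.
apply: functional_extensionality => h; rewrite /push.
by case: excluded_middle_informative.
Qed.

Definition Inv (k : realFieldType) (P : PLG k) : Prop :=
  sto (ltc P) (memc P) /\ memc P (onec P) /\
  (forall g, memc P g -> memc (sharp P) (lc P g)) /\
  (forall g g', memc P g -> memc P g' -> lc P g = lc P g' -> g = g') /\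
  (forall g g', memc P g -> memc P g' -> ltc P g g' -> ltc (sharp P) (lc P g) (lc P g')) /\
  lc P (onec P) = (fun _ => 0) /\
  (forall g, memc P g -> ltc P (onec P) g ->
     ltc P (ser_val (ltc P) (onec P) (lc P g)) g).

Lemma Inv_sharp (k : realFieldType) (P : PLG k) : Inv P -> Inv (sharp P).
Proof.
move=> [hs [h0 [h3 [hinj [hmono [hl0 hmain]]]]]].
have hs' := @ser_sto k _ _ _ hs.
have memS : forall f, memc (sharp P) f -> serM (ltc P) (memc P) f.
  by move=> f [w s]; split=> // h /s [].
have refl : forall g g', memc P g -> memc P g' ->
    ser_lt (ltc P) (lc P g) (lc P g') -> ltc P g g'.
  move=> g g' m m' l; case: (hs.2.2 g g' m m') => [e|[l'|l']] //.
    by subst g'; exfalso; exact: (hs'.1 _ (memS _ (h3 g m)) l).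
  exfalso; apply: (hs'.1 _ (memS _ (h3 g m))).
  exact: (hs'.2.1 _ _ _ (memS _ (h3 g m)) (memS _ (h3 g' m')) (memS _ (h3 g m)) l (hmono g' g m' m l')).
have pv : forall (f : car P -> k) g, memc P g -> push f (lc P g) = f g.
  by move=> f g m; apply: push_val.
have p3 : forall f, memc (sharp P) f -> memc (sharp (sharp P)) (push f).
  move=> f [wf sf]; split.
  - move=> A hA [a0 Aa0].
    have [g [mg [eg fg]]] := push_supp (hA a0 Aa0).
    have [g1 [[m1 [f1 A1]] hg1]] : exists g1, (memc P g1 /\ f g1 <> 0 /\ A (lc P g1)) /\
        forall y, (memc P y /\ f y <> 0 /\ A (lc P y)) -> ~ ltc P g1 y.
      apply: wf; first by move=> x [_ []].
      by exists g; rewrite eg.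
    exists (lc P g1); split=> // y Ay l.
    have [g2 [mg2 [eg2 fg2]]] := push_supp (hA y Ay).
    subst y; apply: (hg1 g2 (conj mg2 (conj fg2 Ay))).
    exact: refl.
  - move=> h hh; have [g [mg [eg fg]]] := push_supp hh; subst h.
    split; first exact: h3.
    have := hmono (onec P) g h0 mg (sf g fg).2.
    by rewrite hl0.
split; [|split; [|split; [|split; [|split; [|split]]]]].
- exact: sto_sub hs' memS.
- split; first by move=> A hA [a Aa]; case: (hA a Aa).
  by move=> h hh; case: hh.
- exact: p3.
- move=> f f' mf mf' e; apply: functional_extensionality => x /=.
  case: (classic (memc P x)) => Mx.
    by have e' : push f = push f' := e; rewrite -(pv f x Mx) -(pv f' x Mx) e'.
  have z : forall F, memc (sharp P) F -> F x = 0.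
    by move=> F [_ s]; apply: NNPP => n; apply: Mx; exact: (s x n).1.
  by rewrite (z f mf) (z f' mf').
- move=> f f' mf mf' [m [lm em]].
  have Mm : memc P m.
    apply: (diff_M (memS _ mf).2 (memS _ mf').2) => e; by rewrite e ltxx in lm.
  exists (lc P m); split; first by rewrite /= !pv.
  move=> h lh /=; rewrite /push; case: excluded_middle_informative => [H|H] //.
  case: (constructive_indefinite_description _ H) => g [mg eg] /=.
  apply: em; subst h; exact: refl.
- exact: push0.
- move=> f mf /= [g0 [pos0 above0]].
  have [wf sf] := mf.
  have fg0 : f g0 <> 0 by move=> e; rewrite e ltxx in pos0.
  have Mg0 := (sf g0 fg0).1.
  have [nz _] := ser_val_spec (fun _ => 0) (p3 f mf).1
     (ex_intro _ (lc P g0) (eq_ind_r (fun x => x <> 0) fg0 (pv f g0 Mg0))).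
  have [g' [mg' [eg' fg']]] := push_supp nz.
  rewrite -eg'.
  apply: (ser_below hs Mg0 pos0); first by move=> h l; rewrite -above0.
  move=> h ah; have [wa sa] := h3 g' mg'; have Mh := (sa h ah).1.
  have hg : g' = g0 \/ ltc P g' g0.
    case: (hs.2.2 g' g0 mg' Mg0) => [e|[l|l]]; [by left|by right|].
    by exfalso; apply: fg'; rewrite -above0.
  have [na ma] := ser_val_spec (onec P) wa (ex_intro _ h ah).
  have lv := hmain g' mg' (sf g' fg').2.
  set v := ser_val (ltc P) (onec P) (lc P g') in na ma lv *.
  have Mv := (sa v na).1.
  have lvg0 : ltc P v g0.
    by case: hg => [<-|l] //; exact: (hs.2.1 _ _ _ Mv mg' Mg0 lv l).
  split=> //.
  case: (hs.2.2 h v Mh Mv) => [->|[l|l]] //.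
    exact: (hs.2.1 _ _ _ Mh Mv Mg0 l lvg0).
  by exfalso; exact: (ma h ah l).
Qed.

Lemma sto_G d (Γ : orderType d) : sto (fun x y : Γ => (x < y)%O) (fun _ => True).
Proof.
split; [|split].
- by move=> x _; rewrite ltxx.
- by move=> x y z _ _ _; apply: lt_trans.
- move=> x y _ _; case: (ltgtP x y) => [l|l|e]; by [right; left|right; right|left].
Qed.

Lemma monom_ne (k : realFieldType) d (Γ : orderType d) (a x : Γ) :
  @monom k d Γ a x <> 0 -> x = a.
Proof. by rewrite /monom; case: eqP. Qed.

Lemma monom_self (k : realFieldType) d (Γ : orderType d) (a : Γ) : @monom k d Γ a a = 1.
Proof. by rewrite /monom eqxx. Qed.

Lemma monom_lt (k : realFieldType) d (Γ : orderType d) (a b : Γ) :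
  ser_lt (fun x y : Γ => (x < y)%O) (@monom k d Γ a) (monom k b) -> (a < b)%O.
Proof.
move=> [p [lp ep]].
have hb : p = b.
  apply: (@monom_ne k); move=> e; rewrite e in lp.
  by move: lp; rewrite /monom; case: eqP => _; rewrite ?ltxx // ltr10.
subst p.
have hab : a != b.
  by apply/eqP => e; subst a; rewrite ltxx in lp.
case: (ltgtP a b) => [//|l|e]; last by rewrite e eqxx in hab.
have := ep a l; rewrite monom_self /monom (negbTE hab) => /eqP.
by rewrite oner_eq0.
Qed.

Lemma monom_pos (k : realFieldType) d (Γ : orderType d) (a : Γ) :
  ser_lt (fun x y : Γ => (x < y)%O) (fun _ => 0) (@monom k d Γ a).
Proof.
exists a; split; first by rewrite monom_self ltr01.
move=> h l; rewrite /monom; case: eqP => // e; subst h; by rewrite ltxx in l.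
Qed.

Lemma Inv_base (k : realFieldType) (d : Order.disp_t) (Γ : orderType d) (σ : Γ -> Γ)
  (hσ_emb : {mono σ : x y / (x < y)%O}) (hσ_lt : forall γ, (σ γ < γ)%O) :
  Inv (hahn_base k σ).
Proof.
have sinj : forall x y, σ x = σ y -> x = y.
  move=> x y e; case: (ltgtP x y) => [l|l|//].
    by move: l; rewrite -hσ_emb e ltxx.
  by move: l; rewrite -hσ_emb e ltxx.
have minj : forall a b : Γ, @monom k d Γ a = monom k b -> a = b.
  move=> a b e; apply: NNPP => n.
  have := f_equal (fun F => F a) e; rewrite /= monom_self /monom.
  case: eqP => // _ /eqP; by rewrite oner_eq0.
have lv : forall g γ, l_sigma σ g (monom k (σ γ)) = g γ.
  move=> g γ; rewrite /l_sigma; case: excluded_middle_informative => [H|H].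
  - case: (constructive_indefinite_description _ H) => δ /= e.
    by rewrite (sinj _ _ (minj _ _ e)).
  - by exfalso; apply: H; exists γ.
have ls : forall g h, l_sigma σ g h <> 0 -> exists γ, h = monom k (σ γ) /\ g γ <> 0.
  move=> g h; rewrite /l_sigma; case: excluded_middle_informative => [H|H] //.
  by case: (constructive_indefinite_description _ H) => δ /= e ne; exists δ.
have hs := @ser_sto k _ _ _ (sto_G Γ).
set lt := (fun x y : Γ => (x < y)%O) in hs *.
have p3 : forall g, anti_wo lt (supp g) ->
    memc (sharp (hahn_base k σ)) (l_sigma σ g).
  move=> g wg; split.
  - move=> A hA [a0 Aa0].
    have [γ [eγ gγ]] := ls _ _ (hA a0 Aa0).
    have [g1 [[f1 A1] hg1]] : exists g1, (g g1 <> 0 /\ A (monom k (σ g1))) /\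
        forall y, (g y <> 0 /\ A (monom k (σ y))) -> ~ lt g1 y.
      apply: wg; first by move=> x [].
      by exists γ; rewrite -eγ.
    exists (monom k (σ g1)); split=> // y Ay l.
    have [δ [eδ gδ]] := ls _ _ (hA y Ay).
    subst y; apply: (hg1 δ (conj gδ Ay)).
    by rewrite /lt -hσ_emb; apply: monom_lt l.
  - move=> h hh; have [γ [eγ gγ]] := ls _ _ hh; subst h; split.
    + move=> A hA [a Aa]; exists a; split=> // y Ay.
      rewrite (monom_ne (hA a Aa)) (monom_ne (hA y Ay)) /lt ltxx //.
    + exact: monom_pos.
split; [|split; [|split; [|split; [|split; [|split]]]]].
- apply: (sto_sub hs) => f wf; split=> //.
- by move=> A hA [a Aa]; case: (hA a Aa).
- exact: p3.
- move=> g g' _ _ e; apply: functional_extensionality => γ.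
  by have e' : l_sigma σ g = l_sigma σ g' := e; rewrite -lv -(lv g') e'.
- move=> g g' _ _ [γ [lγ eγ]].
  exists (monom k (σ γ)); split; first by rewrite /= !lv.
  move=> h lh /=; rewrite /l_sigma; case: excluded_middle_informative => [H|H] //.
  case: (constructive_indefinite_description _ H) => δ /= e.
  apply: eγ; subst h; rewrite -hσ_emb; exact: monom_lt lh.
- apply: functional_extensionality => h; rewrite /= /l_sigma.
  by case: excluded_middle_informative.
- move=> g mg /= [γ0 [pos0 above0]].
  have gγ0 : g γ0 <> 0 by move=> e; rewrite e ltxx in pos0.
  have [nz _] := ser_val_spec (fun _ => 0) (p3 g mg).1
     (ex_intro _ (monom k (σ γ0)) (eq_ind_r (fun x => x <> 0) gγ0 (lv g γ0))).
  have [γ [eγ gγ]] := ls _ _ nz.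
  rewrite eγ.
  apply: (ser_below (sto_G Γ) I pos0); first by move=> h l; rewrite -above0.
  move=> h /monom_ne ->; split=> //.
  case: (ltgtP γ γ0) => [l|l|e].
  + exact: lt_trans (hσ_lt γ) l.
  + by exfalso; apply: gγ; rewrite -above0.
  + by rewrite -e.
Qed.

Theorem mainTheorem13 (k : realFieldType) (d : Order.disp_t) (Γ : orderType d)
  (σ : Γ -> Γ) (log : k -> k)
  (hσ_emb : {mono σ : x y / (x < y)%O})
  (hσ_lt : forall γ, (σ γ < γ)%O)
  (hlog : is_log log)
  (hlog_surj : forall y, exists x, 0 < x /\ log x = y) :
  let G := hahn_base k σ in
  forall (n : nat) (g : car (tower G n)),
    memc (tower G n) g ->
    ltc (tower G n) (onec (tower G n)) g ->
    ltc (tower G n) (ser_val (ltc (tower G n)) (onec (tower G n)) (lc (tower G n) g)) g.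
Proof.
move=> G n.
have : Inv (tower G n).
  elim: n => [|n IH]; first exact: Inv_base.
  exact: Inv_sharp.
by move=> [_ [_ [_ [_ [_ [_ hm]]]]]].
Qed.
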